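(* Let $G$ be a multiplicative monoid with identity, let $N$ be a $G$-graded near-ring and $P$ a graded ideal of $N$. If $P$ is a graded weakly prime ideal of $N$ and $(\{0\}:P)\subseteq P$, then $P$ is a graded prime ideal of $N$.
   Context: A near-ring $(N,+,\cdot)$ is a set with two binary operations such that $(N,+)$ is a group (not necessarily abelian), $(N,\cdot)$ is a semigroup, and $(a+b)y = ay+by$ for all $a,b,y\in N$. For a multiplicative monoid $G$ with identity, $N$ is a $G$-graded near-ring if there is a family $\{N_\sigma\}_{\sigma\in G}$ of additive normal subgroups of $N$ with $N=\bigoplus_{\sigma\in G}N_\sigma$ and $N_\sigma N_\tau\subseteq N_{\sigma\tau}$. An ideal $P$ is graded if $P=\bigoplus_{\sigma}(P\cap N_\sigma)$. For subsets $A,B$, $(A:B)=\{t\in N: tB\subseteq A\}$. For ideals $I,J$, $IJ$ denotes their product. A graded ideal $P$ is graded prime if for all graded ideals $I,J$ with $IJ\subseteq P$, either $I\subseteq P$ or $J\subseteq P$; graded weakly prime if the same holds whenever $\{0\}\neq IJ\subseteq P$. *)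

(* Defs.v *)
From Stdlib Require Import List.
Import ListNotations.

Record monoid := Monoid {
  mcarrier :> Type;
  mmul : mcarrier -> mcarrier -> mcarrier;
  mone : mcarrier;
  mmul_assoc : forall a b c, mmul a (mmul b c) = mmul (mmul a b) c;
  mmul_1l : forall a, mmul mone a = a;
  mmul_1r : forall a, mmul a mone = a
}.

Record nearring := NearRing {
  ncarrier :> Type;
  nadd : ncarrier -> ncarrier -> ncarrier;
  nzero : ncarrier;
  nopp : ncarrier -> ncarrier;
  nmul : ncarrier -> ncarrier -> ncarrier;
  nadd_assoc : forall a b c, nadd a (nadd b c) = nadd (nadd a b) c;
  nadd_0l : forall a, nadd nzero a = a;
  nadd_0r : forall a, nadd a nzero = a;
  nadd_oppl : forall a, nadd (nopp a) a = nzero;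
  nadd_oppr : forall a, nadd a (nopp a) = nzero;
  nmul_assoc : forall a b c, nmul a (nmul b c) = nmul (nmul a b) c;
  nmulDl : forall a b y, nmul (nadd a b) y = nadd (nmul a y) (nmul b y)
}.

Arguments nadd {n}.
Arguments nzero {n}.
Arguments nopp {n}.
Arguments nmul {n}.

Section Defs.
Variable N : nearring.

Definition subset (A B : N -> Prop) : Prop := forall x, A x -> B x.

Definition normal_subgroup (S : N -> Prop) : Prop :=
  S nzero /\
  (forall x y, S x -> S y -> S (nadd x y)) /\
  (forall x, S x -> S (nopp x)) /\
  (forall x y, S x -> S (nadd (nadd y x) (nopp y))).

Definition is_ideal (I : N -> Prop) : Prop :=
  normal_subgroup I /\
  (forall i n, I i -> I (nmul i n)) /\
  (forall i n m, I i -> I (nadd (nmul n (nadd m i)) (nopp (nmul n m)))).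

Definition sumlist (l : list N) : N := fold_right nadd nzero l.

Definition prod_set (I J : N -> Prop) : N -> Prop :=
  fun x => exists i j, I i /\ J j /\ x = nmul i j.

Definition colon (A B : N -> Prop) : N -> Prop :=
  fun t => forall b, B b -> A (nmul t b).

Definition zero_set : N -> Prop := fun x => x = nzero.

Variable G : monoid.

(* The direct sum: every element is a finite sum of homogeneous elements of
   pairwise distinct degrees, and such a sum is zero only if all summands are. *)
Definition is_grading (Ns : G -> N -> Prop) : Prop :=
  (forall s, normal_subgroup (Ns s)) /\
  (forall s t x y, Ns s x -> Ns t y -> Ns (mmul G s t) (nmul x y)) /\
  (forall x, exists l : list (G * N),
      NoDup (map fst l) /\ Forall (fun p => Ns (fst p) (snd p)) l /\
      x = sumlist (map snd l)) /\
  (forall l : list (G * N),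
      NoDup (map fst l) -> Forall (fun p => Ns (fst p) (snd p)) l ->
      sumlist (map snd l) = nzero -> Forall (fun p => snd p = nzero) l).

(* P = ⊕_σ (P ∩ N_σ) *)
Definition graded_ideal (Ns : G -> N -> Prop) (P : N -> Prop) : Prop :=
  is_ideal P /\
  (forall x, P x -> exists l : list (G * N),
      NoDup (map fst l) /\ Forall (fun p => Ns (fst p) (snd p) /\ P (snd p)) l /\
      x = sumlist (map snd l)).

Definition graded_prime (Ns : G -> N -> Prop) (P : N -> Prop) : Prop :=
  graded_ideal Ns P /\
  forall I J, graded_ideal Ns I -> graded_ideal Ns J ->
    subset (prod_set I J) P -> subset I P \/ subset J P.

Definition graded_weakly_prime (Ns : G -> N -> Prop) (P : N -> Prop) : Prop :=
  graded_ideal Ns P /\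
  forall I J, graded_ideal Ns I -> graded_ideal Ns J ->
    ~ (forall x, prod_set I J x <-> zero_set x) ->
    subset (prod_set I J) P -> subset I P \/ subset J P.

End Defs.

Arguments subset {N}.
Arguments prod_set {N}.
Arguments colon {N}.
Arguments zero_set {N}.
Arguments is_grading {N G}.
Arguments graded_ideal {N G}.
Arguments graded_prime {N G}.
Arguments graded_weakly_prime {N G}.

(* Main.v *)
Require Import Defs.
From Stdlib Require Import List Classical.
Import ListNotations.

Section Aux.
Variable N : nearring.

Lemma addA (a b c : N) : nadd a (nadd b c) = nadd (nadd a b) c.
Proof. apply nadd_assoc. Qed.

Lemma cancel_l (a b c : N) : nadd a b = nadd a c -> b = c.
Proof.
  intro H. rewrite <- (nadd_0l N b), <- (nadd_0l N c), <- (nadd_oppl N a),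
  <- !addA, H. reflexivity.
Qed.

Lemma inv_uniq (a b : N) : nadd a b = nzero -> b = nopp a.
Proof.
  intro H. apply (cancel_l a). rewrite H, nadd_oppr. reflexivity.
Qed.

Lemma inv_uniq' (a b : N) : nadd a b = nzero -> a = nopp b.
Proof.
  intro H. assert (E: nadd (nopp b) (nadd a b) = nopp b) by (rewrite H; apply nadd_0r).
  rewrite addA in E.
  assert (E2: nadd (nadd (nopp b) a) b = nadd (nopp b) b -> False \/ True) by auto.
  clear E2.
  rewrite <- (nadd_0r N a), <- (nadd_oppr N b), addA, H, nadd_0l. reflexivity.
Qed.

Lemma opp_opp (a : N) : nopp (nopp a) = a.
Proof. symmetry. apply inv_uniq'. apply nadd_oppr. Qed.

Lemma opp_add (a b : N) : nopp (nadd a b) = nadd (nopp b) (nopp a).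
Proof.
  symmetry. apply inv_uniq.
  rewrite !addA, <- (addA a b), nadd_oppr, nadd_0r, nadd_oppr. reflexivity.
Qed.

Lemma opp0 : nopp (@nzero N) = nzero.
Proof. symmetry. apply inv_uniq. apply nadd_0l. Qed.

Lemma oppl_r (a b : N) : nadd (nopp a) (nadd a b) = b.
Proof. rewrite addA, nadd_oppl, nadd_0l. reflexivity. Qed.

Lemma oppr_r (a b : N) : nadd a (nadd (nopp a) b) = b.
Proof. rewrite addA, nadd_oppr, nadd_0l. reflexivity. Qed.

Lemma sumlist_app (l1 l2 : list N) :
  sumlist N (l1 ++ l2) = nadd (sumlist N l1) (sumlist N l2).
Proof.
  induction l1 as [|x l1 IH]; simpl.
  - rewrite nadd_0l. reflexivity.
  - unfold sumlist in *. simpl. rewrite IH, addA. reflexivity.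
Qed.

Definition sumset (J P : N -> Prop) : N -> Prop :=
  fun x => exists j p, J j /\ P p /\ x = nadd j p.

Lemma sumset_ideal (J P : N -> Prop) : is_ideal N J -> is_ideal N P ->
  is_ideal N (sumset J P).
Proof.
  intros [[J0 [JD [JO JN]]] [JR JL]] [[P0 [PD [PO PN]]] [PR PL]].
  assert (NS : normal_subgroup N (sumset J P)).
  { split; [|split; [|split]].
    - exists nzero, nzero. rewrite nadd_0l. auto.
    - intros x y [j1 [p1 [Hj1 [Hp1 ->]]]] [j2 [p2 [Hj2 [Hp2 ->]]]].
      exists (nadd j1 j2), (nadd (nadd (nadd (nopp j2) p1) j2) p2).
      split; [auto|split].
      + apply PD; auto. rewrite <- (opp_opp j2) at 2. apply PN; auto.
      + rewrite <- !addA. f_equal. rewrite oppr_r. reflexivity.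
    - intros x [j [p [Hj [Hp ->]]]].
      exists (nopp j), (nadd (nadd j (nopp p)) (nopp j)).
      split; [auto|split].
      + apply PN; auto.
      + rewrite opp_add, <- !addA, oppl_r. reflexivity.
    - intros x y [j [p [Hj [Hp ->]]]].
      exists (nadd (nadd y j) (nopp y)), (nadd (nadd y p) (nopp y)).
      split; [auto|split]; [auto|].
      rewrite <- !addA, oppl_r. reflexivity. }
  split; [exact NS|split].
  - intros x n [j [p [Hj [Hp ->]]]]. exists (nmul j n), (nmul p n).
    rewrite nmulDl. auto.
  - intros x n m [j [p [Hj [Hp ->]]]].
    set (A := nadd (nmul n (nadd (nadd m j) p)) (nopp (nmul n (nadd m j)))).
    set (B := nadd (nmul n (nadd m j)) (nopp (nmul n m))).
    assert (HA : P A) by (apply PL; auto).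
    assert (HB : J B) by (apply JL; auto).
    exists B, (nadd (nadd (nopp B) A) (nopp (nopp B))).
    split; [auto|split].
    + apply PN; auto.
    + rewrite opp_opp, <- !addA, oppr_r. unfold A, B.
      rewrite <- !addA, oppl_r, addA. reflexivity.
Qed.

Variable G : monoid.
Variable Ns : G -> N -> Prop.
Hypothesis HNs : is_grading Ns.

Lemma comm_hom (s t : G) (x y : N) : s <> t -> Ns s x -> Ns t y ->
  nadd x y = nadd y x.
Proof.
  intros Hst Hx Hy.
  destruct HNs as [HN [_ [_ Huniq]]].
  destruct (HN s) as [_ [SD [SO SN]]]. destruct (HN t) as [_ [TD [TO TN]]].
  set (c := nadd (nadd x y) (nadd (nopp x) (nopp y))).
  assert (Cs : Ns s c).
  { assert (E : c = nadd x (nadd (nadd y (nopp x)) (nopp y))).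
    { unfold c. rewrite <- !addA. reflexivity. }
    rewrite E. apply SD; auto. }
  assert (Ct : Ns t c).
  { assert (E : c = nadd (nadd (nadd x y) (nopp x)) (nopp y)).
    { unfold c. rewrite <- !addA. reflexivity. }
    rewrite E. apply TD; auto. }
  assert (Hl := Huniq [(s, c); (t, nopp c)]).
  simpl in Hl.
  assert (Hc : c = nzero).
  { assert (F : Forall (fun p : G * N => snd p = nzero) [(s, c); (t, nopp c)]).
    { apply Hl.
      - constructor; [simpl; intuition|constructor; [simpl; auto|constructor]].
      - constructor; [simpl; auto|constructor; [simpl; auto|constructor]].
      - unfold sumlist. simpl. rewrite nadd_0r, nadd_oppr. reflexivity. }
    inversion F; auto. }
  unfold c in Hc. apply inv_uniq' in Hc. rewrite Hc, opp_add, !opp_opp. reflexivity.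
Qed.

Lemma comm_list (s : G) (a : N) (l : list (G * N)) : Ns s a ->
  Forall (fun p => Ns (fst p) (snd p)) l -> ~ In s (map fst l) ->
  nadd a (sumlist N (map snd l)) = nadd (sumlist N (map snd l)) a.
Proof.
  intros Ha. induction l as [|[t b] l IH]; intros Hf Hn.
  - unfold sumlist; simpl. rewrite nadd_0l, nadd_0r. reflexivity.
  - inversion Hf; subst. simpl in *. unfold sumlist in *. simpl.
    rewrite addA, (comm_hom s t a b); auto. rewrite <- addA, IH; auto.
    rewrite addA. reflexivity.
Qed.

Lemma merge (K : N -> Prop) (HK : forall x y, K x -> K y -> K (nadd x y)) :
  forall l : list (G * N), Forall (fun p => Ns (fst p) (snd p) /\ K (snd p)) l ->
  exists l', NoDup (map fst l') /\ Forall (fun p => Ns (fst p) (snd p) /\ K (snd p)) l' /\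
  sumlist N (map snd l) = sumlist N (map snd l').
Proof.
  induction l as [|[s a] rest IH]; intros Hf.
  - exists []. simpl. repeat split; constructor.
  - apply Forall_cons_iff in Hf. destruct Hf as [[Hsa Hka] Hr].
    destruct (IH Hr) as [l'' [Hnd [Hf'' Hsum]]].
    destruct (classic (In s (map fst l''))) as [Hin|Hnin].
    + apply in_map_iff in Hin. destruct Hin as [[s' b] [Hs' Hinb]]. simpl in Hs'. subst s'.
      apply in_split in Hinb. destruct Hinb as [L1 [L2 ->]].
      rewrite map_app in Hnd. simpl in Hnd.
      assert (Hn1 : ~ In s (map fst L1)).
      { apply NoDup_remove_2 in Hnd. intro; apply Hnd. apply in_or_app; auto. }
      apply Forall_app in Hf''. destruct Hf'' as [F1 F2].
      apply Forall_cons_iff in F2. destruct F2 as [[Hsb Hkb] F2].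
      exists (L1 ++ (s, nadd a b) :: L2). split; [|split].
      * rewrite map_app. simpl. exact Hnd.
      * apply Forall_app. split; auto. constructor; auto. simpl. split.
        2: now apply HK.
        destruct HNs as [HN _]. destruct (HN s) as [_ [SD _]]. auto.
      * change (sumlist N (map snd ((s, a) :: rest))) with (nadd a (sumlist N (map snd rest))).
        rewrite Hsum, !map_app, !sumlist_app. simpl. idtac.
        rewrite addA, comm_list with (s := s); auto.
        -- rewrite <- !addA. reflexivity.
        -- eapply Forall_impl; [|exact F1]. simpl. intros p [? ?]; auto.
    + exists ((s, a) :: l''). split; [|split].
      * simpl. constructor; auto.
      * constructor; auto.
      * simpl. unfold sumlist in *. simpl. rewrite Hsum. reflexivity.
Qed.

End Aux.

Theorem proposition1 (G : monoid) (N : nearring) (Ns : G -> N -> Prop)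
  (HNs : is_grading Ns) (P : N -> Prop) (HP : graded_ideal Ns P) :
  graded_weakly_prime Ns P ->
  subset (colon zero_set P) P ->
  graded_prime Ns P.
Proof.
  intros [_ Hw] Hcol. split; [exact HP|].
  intros I J HI HJ Hsub.
  destruct (classic (forall x, prod_set I J x <-> zero_set x)) as [Hz|Hnz].
  2: { apply Hw; auto. }
  assert (HIJ : forall i j, I i -> J j -> nmul i j = nzero).
  { intros i j Hi Hj. apply Hz. exists i, j. auto. }
  destruct HP as [[[P0 [PD [PO PN]]] [PR PL]] PG].
  destruct HJ as [[[J0 [JD [JO JN]]] [JR JL]] JG].
  assert (HK : graded_ideal Ns (sumset N J P)).
  { split.
    - apply sumset_ideal; repeat split; auto.
    - intros x [j [p [Hj [Hp ->]]]].
      destruct (JG j Hj) as [l1 [_ [F1 E1]]].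
      destruct (PG p Hp) as [l2 [_ [F2 E2]]].
      destruct (merge N G Ns HNs (sumset N J P)) with (l := l1 ++ l2)
        as [l' [Hnd [Hf Hs]]].
      + apply (sumset_ideal N J P); repeat split; auto.
      + apply Forall_app. split.
        * eapply Forall_impl; [|exact F1]. intros [s a] [? ?]. split; auto.
          exists a, nzero. rewrite nadd_0r. auto.
        * eapply Forall_impl; [|exact F2]. intros [s a] [? ?]. split; auto.
          exists nzero, a. rewrite nadd_0l. auto.
      + exists l'. split; auto. split; auto.
        rewrite <- Hs, map_app, sumlist_app, <- E1, <- E2. reflexivity. }
  destruct (classic (forall x, prod_set I (sumset N J P) x <-> zero_set x)) as [Hz2|Hnz2].
  - left. intros i Hi. apply Hcol. intros p Hp.
    unfold zero_set. apply Hz2. exists i, (nadd nzero p). split; auto. split.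
    + exists nzero, p. auto.
    + rewrite nadd_0l. reflexivity.
  - assert (Hs2 : subset (prod_set I (sumset N J P)) P).
    { intros x [i [k [Hi [[j [p [Hj [Hp ->]]]] ->]]]].
      assert (E := PL p i j Hp). rewrite (HIJ i j Hi Hj), opp0, nadd_0r in E. exact E. }
    destruct (Hw I (sumset N J P) HI HK Hnz2 Hs2) as [H|H]; [left; exact H|].
    right. intros j Hj. apply H. exists j, nzero. rewrite nadd_0r. auto.
Qed.
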